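(* Let $R$ be a ring with identity such that every element of $R$ is either a sum or a difference of a nilpotent element and an idempotent element (i.e. for each $x\in R$ there exist an idempotent $e$ and a nilpotent $q$ with $x = e+q$ or $x = q - e$). If $2$ is a unit in $R$, then $R/\operatorname{Nil}^*(R) \cong \mathbb{Z}_3$, where $\operatorname{Nil}^*(R)$ denotes the upper nilradical of $R$.
   Context: Rings are associative with identity. The upper nilradical $\operatorname{Nil}^*(R)$ is the largest nil ideal of $R$ (the sum of all nil ideals). $\mathbb{Z}_3$ is the ring of integers modulo $3$. *)

(* Defs.v *)
From HB Require Import structures.
From mathcomp Require Import all_boot all_order all_algebra.
Set Implicit Arguments. Unset Strict Implicit. Unset Printing Implicit Defensive.
Import GRing.Theory.
Local Open Scope ring_scope.

Definition idempotent_el (R : nzRingType) (e : R) : Prop := e * e = e.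
Definition nilpotent_el (R : nzRingType) (q : R) : Prop := exists n : nat, q ^+ n = 0.

Definition is_ideal (R : nzRingType) (I : R -> Prop) : Prop :=
  [/\ I 0,
      (forall x y, I x -> I y -> I (x + y)),
      (forall x, I x -> I (- x)),
      (forall r x, I x -> I (r * x)) &
      (forall r x, I x -> I (x * r))].

Definition nil_ideal (R : nzRingType) (I : R -> Prop) : Prop :=
  is_ideal I /\ forall x, I x -> nilpotent_el x.

(* Upper nilradical Nil*(R): the sum of all nil ideals of R, i.e. the set of
   finite sums of elements each lying in some nil ideal. *)
Definition upper_nilradical (R : nzRingType) (x : R) : Prop :=
  exists s : seq R,
    x = \sum_(y <- s) y /\
    (forall y, y \in s -> exists I : R -> Prop, nil_ideal I /\ I y).

(* Main.v *)
Require Import Defs.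
From HB Require Import structures.
From mathcomp Require Import all_boot all_order all_algebra.
From Stdlib Require Import IndefiniteDescription.
Import GRing.Theory.
Local Open Scope ring_scope.

Lemma pow_inv (R : nzRingType) (a b : R) n : a * b = 1 -> a ^+ n * b ^+ n = 1.
Proof.
move=> ab; elim: n => [|n IH]; first by rewrite !expr0 mulr1.
by rewrite exprSr exprS mulrA -(mulrA _ a) ab mulr1.
Qed.

Lemma nil_rinv (R : nzRingType) (q s : R) : nilpotent_el q -> q * s = 1 -> False.
Proof.
move=> [n qn] qs; have := @pow_inv _ _ _ n qs; rewrite qn mul0r => /eqP.
by rewrite eq_sym oner_eq0.
Qed.

Lemma nil_linv (R : nzRingType) (q s : R) : nilpotent_el q -> s * q = 1 -> False.
Proof.
move=> [n qn] qs; have := @pow_inv _ _ _ n qs; rewrite qn mulr0 => /eqP.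
by rewrite eq_sym oner_eq0.
Qed.

Lemma nilN (R : nzRingType) (q : R) : nilpotent_el q -> nilpotent_el (- q).
Proof. by move=> [n qn]; exists n; rewrite exprNn qn mulr0. Qed.

Lemma nil_comm (R : nzRingType) (a b : R) :
  GRing.comm a b -> nilpotent_el a -> nilpotent_el (a * b).
Proof. by move=> cab [n an]; exists n; rewrite exprMn_comm // an mul0r. Qed.

Lemma inv1q (R : nzRingType) (q : R) : nilpotent_el q ->
  exists v, (1 + q) * v = 1 /\ v * (1 + q) = 1.
Proof.
move=> [n qn]; exists (\sum_(i < n) (- q) ^+ i).
have h : (1 + q) * \sum_(i < n) (- q) ^+ i = 1.
  have := subrX1 (- q) n; rewrite exprNn qn mulr0 sub0r -opprD addrC mulNr.
  by move/oppr_inj => <-.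
split=> //; rewrite -[RHS]h; apply/esym/commr_sum => i _.
by apply: commrX; rewrite /GRing.comm mulrN mulNr mulrDl mulrDr mul1r mulr1.
Qed.

Lemma core (R : nzRingType) (w g q : R) : w * w = 1 -> g * g = g -> w = g + q ->
  nilpotent_el q -> q * w = w * q.
Proof.
move=> ww gg wgq nq.
have hq : q = w - g by rewrite wgq addrC addKr.
have hc : w * (q * q + q) = (q * q + q) * w.
  rewrite hq !(mulrBl, mulrBr, mulrDl, mulrDr) !mulrA ww gg mul1r -!mulrA ww gg mulr1.
  rewrite mul1r !opprB !addrA.
  set A := w * (g * w); set B := w * g; set C := g * w.
  rewrite (addrAC _ 1 (-B)) (addrAC _ (-A) (-B)) addrK.
  rewrite (addrAC _ 1 (-C)) (addrAC _ (-g) (-C)) addrK.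
  by rewrite (addrAC w).
have powq' : forall n, (w * q * w) ^+ n = w * q ^+ n * w.
  elim=> [|n IH]; first by rewrite !expr0 mulr1 ww.
  by rewrite exprSr IH exprSr -!mulrA (mulrA w w) ww mul1r.
have hc' : (w*q*w) * (w*q*w) + w*q*w = q * q + q.
  rewrite -!mulrA (mulrA w w) ww mul1r !mulrA -mulrDl -(mulrA w q q) -mulrDr hc -mulrA ww mulr1 //.
set q' := w * q * w in powq' hc'.
have hd : (q - q') * (1 + q) = - (q' * (q - q')).
  rewrite mulrDr mulr1 mulrBl mulrBr opprB.
  have -> : q' * q' = q * q + q - q' by rewrite -hc' addrK.
  by rewrite addrA; congr (_ - _); rewrite addrC addrA.
have hdn : forall n, (q - q') * (1 + q) ^+ n = (- q') ^+ n * (q - q').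
  elim=> [|n IH]; first by rewrite !expr0 mulr1 mul1r.
  by rewrite exprSr mulrA IH -mulrA hd exprSr -mulrA mulNr.
have [v [v1 _]] := @inv1q _ q nq.
have [n qn] := nq.
have e0 : q - q' = 0.
  have h := @pow_inv _ _ _ n v1.
  by rewrite -[q - q']mulr1 -h mulrA hdn exprNn powq' qn mulr0 !mul0r !mulr0 !mul0r.
have : q = q' by apply/eqP; rewrite -subr_eq0 e0.
by rewrite /q' => {1}->; rewrite -mulrA ww mulr1.
Qed.

Lemma half_central (R : nzRingType) (u : R) : 2%:R * u = 1 -> u * 2%:R = 1 ->
  forall x, u * x = x * u.
Proof.
move=> h1 h2 x.
rewrite -[u * x]mulr1 -h1 (mulrA (u*x)) -(mulrA u x) (commr_nat x 2) mulrA h2 mul1r.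
by [].
Qed.

Lemma idem_one (R : nzRingType) (u e g q : R) : 2%:R * u = 1 -> u * 2%:R = 1 ->
  e * e = e -> g * g = g -> nilpotent_el q -> e + e - 1 = g + q -> e = 1.
Proof.
move=> h1 h2 ee gg nq hw.
set w := e + e - 1 in hw.
have ww : w * w = 1.
  rewrite /w !(mulrBl, mulrBr, mulrDl, mulrDr) ee !mul1r !mulr1 opprB.
  by rewrite addrK addrC subrK.
have qw := @core _ w g q ww gg hw nq.
have qe : q * e = e * q.
  move: qw; rewrite /w mulrBr mulrBl mulr1 mul1r mulrDr mulrDl => /addIr.
  rewrite -(mulr2n (q*e)) -(mulr2n (e*q)) -(mulr_natl (q*e)) -(mulr_natl (e*q)) => H.
  by have := congr1 (fun x => u * x) H; rewrite /= !mulrA h2 !mul1r.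
have hg : g = w - q by rewrite hw addrK.
have gq : g * q = q * g by rewrite hg mulrBl mulrBr qw.
set f := 1 - e.
have wf : w * f = - f.
  rewrite /w /f mulrBr mulr1 mulrBl mulrDl ee mul1r opprB.
  by rewrite opprD (addrA e) subrr sub0r (addrAC (e + e)) addrK opprB.
have hf : (1 + g) * f = - (q * f).
  have H : g * f + q * f = - f by rewrite -mulrDl -hw wf.
  rewrite mulrDl mul1r.
  have -> : g * f = - f - q * f by rewrite -H addrK.
  by rewrite addrA subrr sub0r.
have inv : (1 - u * g) * (1 + g) = 1.
  rewrite mulrBl mul1r mulrDr mulr1 -mulrA gg -mulrDl -(mulr2n u) -(mulr_natr u 2) h2 mul1r.
  by rewrite addrK.
have hu := @half_central _ u h1 h2.
have ct : q * (1 - u * g) = (1 - u * g) * q.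
  by rewrite mulrBr mulrBl mulr1 mul1r mulrA -hu -mulrA -gq mulrA.
set t := - ((1 - u * g) * q).
have nt : nilpotent_el t.
  by apply: nilN; rewrite -ct; apply: nil_comm.
have tf : t * f = f.
  by rewrite /t mulNr -mulrA -mulrN -hf mulrA inv mul1r.
have tnf : forall n, t ^+ n * f = f.
  elim=> [|n IH]; first by rewrite expr0 mul1r.
  by rewrite exprSr -mulrA tf IH.
have [n tn] := nt.
have f0 : f = 0 by rewrite -(tnf n) tn mul0r.
by apply/eqP; rewrite eq_sym -subr_eq0 -/f f0.
Qed.

Definition wnc (R : nzRingType) := forall x : R, exists e q : R,
      idempotent_el e /\ nilpotent_el q /\ (x = e + q \/ x = q - e).

Lemma nil0 (R : nzRingType) : nilpotent_el (0 : R).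
Proof. by exists 1%N; rewrite expr1. Qed.

Lemma idem01 (R : nzRingType) (u : R) : wnc R -> 2%:R * u = 1 -> u * 2%:R = 1 ->
  forall e : R, e * e = e -> e = 0 \/ e = 1.
Proof.
move=> H h1 h2 e ee.
have [g [q [gg [nq [hx|hx]]]]] := H (e + e - 1).
  by right; apply: (@idem_one _ u e g q h1 h2 ee gg nq hx).
left.
have ff : (1 - e) * (1 - e) = 1 - e.
  by rewrite mulrBl mul1r mulrBr mulr1 ee subrr subr0.
have hf : (1 - e) + (1 - e) - 1 = g + - q.
  have -> : (1 - e) + (1 - e) - 1 = - (e + e - 1).
    by rewrite addrAC (addrAC 1) subrr add0r opprB opprD addrCA.
  by rewrite hx opprB addrC.
have := @idem_one _ u (1 - e) g (- q) h1 h2 ff gg (@nilN _ q nq) hf.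
by move/eqP; rewrite subr_eq addrC -subr_eq subrr eq_sym => /eqP.
Qed.

Lemma trich (R : nzRingType) (u : R) : wnc R -> 2%:R * u = 1 -> u * 2%:R = 1 ->
  forall x : R, nilpotent_el x \/ nilpotent_el (x - 1) \/ nilpotent_el (x + 1).
Proof.
move=> H h1 h2 x.
have [e [q [ee [nq hx]]]] := H x.
move: hx; have [->|->] := @idem01 _ u H h1 h2 e ee.
  by case=> ->; left; rewrite ?add0r ?subr0.
by case=> ->; right; [left; rewrite addrC addKr | right; rewrite subrK].
Qed.

Lemma rinv_neg (R : nzRingType) (q : R) : nilpotent_el q ->
  exists v, (- (1 + q)) * v = 1 /\ v * (- (1 + q)) = 1.
Proof.
move=> nq; have [v [h1 h2]] := @inv1q _ q nq.
by exists (- v); rewrite mulNr mulrN opprK mulNr mulrN opprK.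
Qed.

Lemma nilmull (R : nzRingType) (u : R) : wnc R -> 2%:R * u = 1 -> u * 2%:R = 1 ->
  forall q r : R, nilpotent_el q -> nilpotent_el (r * q).
Proof.
move=> H h1 h2 q r nq.
have [//|[n1|n1]] := @trich _ u H h1 h2 (r * q).
  have [v [_ hv]] := @inv1q _ _ n1.
  move: hv; rewrite addrC subrK mulrA => hv.
  by case: (@nil_linv _ q _ nq hv).
have [v [_ hv]] := @rinv_neg _ _ (@nilN _ _ n1).
move: hv; rewrite opprD opprK addrC addrK mulrA => hv.
by case: (@nil_linv _ q _ nq hv).
Qed.

Lemma nilmulr (R : nzRingType) (u : R) : wnc R -> 2%:R * u = 1 -> u * 2%:R = 1 ->
  forall q r : R, nilpotent_el q -> nilpotent_el (q * r).
Proof.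
move=> H h1 h2 q r nq.
have [//|[n1|n1]] := @trich _ u H h1 h2 (q * r).
  have [v [hv _]] := @inv1q _ _ n1.
  move: hv; rewrite addrC subrK -mulrA => hv.
  by case: (@nil_rinv _ q _ nq hv).
have [v [hv _]] := @rinv_neg _ _ (@nilN _ _ n1).
move: hv; rewrite opprD opprK addrC addrK -mulrA => hv.
by case: (@nil_rinv _ q _ nq hv).
Qed.

Lemma nilD (R : nzRingType) (u : R) : wnc R -> 2%:R * u = 1 -> u * 2%:R = 1 ->
  forall a b : R, nilpotent_el a -> nilpotent_el b -> nilpotent_el (a + b).
Proof.
move=> H h1 h2 a b na nb.
have key : forall v, (a + b) * v = 1 -> False.
  move=> v hv.
  have nav := @nilmulr _ u H h1 h2 a v na.
  have [T [hT _]] := @inv1q _ _ (@nilN _ _ nav).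
  have bv : b * v = 1 - a * v by rewrite -hv mulrDl addrC addKr.
  by apply: (@nil_rinv _ b (v * T) nb); rewrite mulrA bv.
have [//|[n1|n1]] := @trich _ u H h1 h2 (a + b).
  have [v [hv _]] := @inv1q _ _ n1.
  by move: hv; rewrite addrC subrK => /key.
have [v [hv _]] := @rinv_neg _ _ (@nilN _ _ n1).
by move: hv; rewrite opprD opprK addrC addrK => /key.
Qed.

Lemma nil3 (R : nzRingType) (u : R) : wnc R -> 2%:R * u = 1 -> u * 2%:R = 1 ->
  nilpotent_el (3%:R : R).
Proof.
move=> H h1 h2.
have [n2|[n1|n3]] := @trich _ u H h1 h2 2%:R.
- by case: (@nil_rinv _ _ _ n2 h1).
- move: n1; rewrite -natr1 addrK => n1.
  by case: (@nil_rinv _ 1 1 n1 (mulr1 1)).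
- by rewrite -natr1.
Qed.

Lemma nat_mod3 (R : nzRingType) (u : R) : wnc R -> 2%:R * u = 1 -> u * 2%:R = 1 ->
  forall n : nat, nilpotent_el (n%:R - (n %% 3)%:R : R).
Proof.
move=> H h1 h2 n.
rewrite {1}(divn_eq n 3) natrD natrM addrK.
rewrite (commr_nat _ 3).
by apply: nil_comm; [apply: commr_nat | apply: (@nil3 _ u H h1 h2)].
Qed.

Lemma notnil (R : nzRingType) (u : R) : 2%:R * u = 1 ->
  forall m n : nat, (m < 3)%N -> (n < 3)%N -> m != n ->
  ~ nilpotent_el (m%:R - n%:R : R).
Proof.
move=> h1 m n hm hn mn.
have k12 : forall k : nat, (0 < k < 3)%N -> ~ nilpotent_el (k%:R : R).
  move=> [|[|[|k]]] // _ nk.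
    by apply: (@nil_rinv _ _ 1 nk); rewrite mulr1.
  by apply: (@nil_rinv _ _ u nk).
case: (ltngtP n m) => hnm; last by rewrite hnm eqxx in mn.
  rewrite -(natrB _ (ltnW hnm)); apply: k12.
  by rewrite (leq_ltn_trans (leq_subr n m) hm) subn_gt0 hnm.
move=> nk; apply: (k12 (n - m)%N).
  by rewrite (leq_ltn_trans (leq_subr m n) hn) subn_gt0 hnm.
move: nk; rewrite -opprB -(natrB _ (ltnW hnm)).
by move/(@nilN _ _); rewrite opprK.
Qed.
Theorem lemma2 (R : nzRingType) :
  (forall x : R, exists e q : R,
      idempotent_el e /\ nilpotent_el q /\ (x = e + q \/ x = q - e)) ->
  (exists u : R, 2%:R * u = 1 /\ u * 2%:R = 1) ->
  exists f : {rmorphism R -> 'Z_3},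
    (forall z : 'Z_3, exists x : R, f x = z) /\
    (forall x : R, f x = 0 <-> upper_nilradical x).
Proof.
move=> H [u [h1 h2]].
have ex : forall x : R, exists k : 'Z_3, nilpotent_el (x - (val k)%:R).
  move=> x; have [n0|[n1|n2]] := @trich _ u H h1 h2 x.
  - by exists 0; rewrite /= subr0.
  - by exists 1.
  - exists (-1); have -> : val (-1 : 'Z_3) = 2%N by [].
    rewrite (_ : x - 2%:R = (x + 1) + - 3%:R).
      by apply: (@nilD _ u H h1 h2) => //; apply: (@nilN _ _ (@nil3 _ u H h1 h2)).
    by rewrite -[3%:R](@natr1 R 2) [in RHS]opprD [in RHS]addrA [in RHS](addrAC (x + 1)) [in RHS]addrK.
have uniq : forall (x : R) (a b : 'Z_3), nilpotent_el (x - (val a)%:R) ->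
    nilpotent_el (x - (val b)%:R) -> a = b.
  move=> x a b na nb.
  have nd : nilpotent_el ((val a)%:R - (val b)%:R : R).
    have := @nilD _ u H h1 h2 _ _ nb (@nilN _ _ na).
    by rewrite opprB addrC addrA subrK.
  apply: val_inj; apply/eqP; apply: contraT => ab.
  by case: (@notnil _ u h1 (val a) (val b) (ltn_ord a) (ltn_ord b) ab nd).
pose f (x : R) := proj1_sig (constructive_indefinite_description _ (ex x)).
have fspec (x : R) : nilpotent_el (x - (val (f x))%:R) := proj2_sig (constructive_indefinite_description _ (ex x)).
have fP (x : R) (k : 'Z_3) : nilpotent_el (x - (val k)%:R) -> f x = k.
  by move=> hk; apply: (uniq x _ _ (fspec x) hk).
have nilx x : nilpotent_el (x - x) by rewrite subrr; apply: nil0.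
have f0 : f 0 = 0 by apply: fP; rewrite /= subr0; apply: nil0.
have f1 : f 1 = 1 by apply: fP; exact: nilx.
have fD : {morph f : x y / x + y}.
  move=> x y; apply: fP.
  have -> : val (f x + f y) = ((val (f x) + val (f y)) %% 3)%N by [].
  have -> : x + y - ((val (f x) + val (f y)) %% 3)%:R =
      (x - (val (f x))%:R) + (y - (val (f y))%:R) +
      ((val (f x) + val (f y))%:R - ((val (f x) + val (f y)) %% 3)%:R).
    rewrite natrD; move: (_ %:R) (_ %:R) (_ %:R) => A B C.
    by rewrite (addrACA x (-B) y (-A)) -opprD -(addrA (x + y)) addKr.
  apply: (@nilD _ u H h1 h2); last exact: (@nat_mod3 _ u H h1 h2).
  by apply: (@nilD _ u H h1 h2); apply: fspec.
have fM : {morph f : x y / x * y}.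
  move=> x y; apply: fP.
  have -> : val (f x * f y) = ((val (f x) * val (f y)) %% 3)%N by [].
  have -> : x * y - ((val (f x) * val (f y)) %% 3)%:R =
      (x - (val (f x))%:R) * y + (val (f x))%:R * (y - (val (f y))%:R) +
      ((val (f x) * val (f y))%:R - ((val (f x) * val (f y)) %% 3)%:R).
    rewrite natrM; move: (_ %:R) (_ %:R) (_ %:R) => A B C.
    by rewrite mulrBl mulrBr -(addrA (x * y)) addKr -(addrA (x * y)) addKr.
  apply: (@nilD _ u H h1 h2); last exact: (@nat_mod3 _ u H h1 h2).
  apply: (@nilD _ u H h1 h2).
    by apply: (@nilmulr _ u H h1 h2); apply: fspec.
  by apply: (@nilmull _ u H h1 h2); apply: fspec.
pose fa := GRing.isNmodMorphism.Build R 'Z_3 f (f0, fD).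
pose fm := GRing.isMonoidMorphism.Build R 'Z_3 f (f1, fM).
pose F : {rmorphism R -> 'Z_3} := HB.pack f fa fm.
have nI : nil_ideal (@nilpotent_el R).
  split=> //; split.
  - exact: nil0.
  - exact: (@nilD _ u H h1 h2).
  - exact: (@nilN _).
  - by move=> r x nx; apply: (@nilmull _ u H h1 h2).
  - by move=> r x nx; apply: (@nilmulr _ u H h1 h2).
exists F; split.
  move=> z; exists (val z)%:R; apply: fP; exact: nilx.
move=> x; split.
  move=> fx0; have := fspec x; rewrite [f x]fx0 /= subr0 => nx.
  exists [:: x]; split; first by rewrite big_seq1.
  by move=> y; rewrite inE => /eqP ->; exists (@nilpotent_el R).
move=> [s [-> hs]]; apply: fP; rewrite /= subr0.
elim: s hs => [|y s IH] hs; first by rewrite big_nil; apply: nil0.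
rewrite big_cons; apply: (@nilD _ u H h1 h2).
  have [I [[_ nilI] Iy]] := hs y (mem_head _ _).
  exact: nilI.
by apply: IH => z zs; apply: hs; rewrite inE zs orbT.
Qed.
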